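(* Let $m$ be a positive integer and $c\in\mathbb{F}_{2^m}^*$. Then the polynomial \[ g(x)=x^{2^{m}(2^{2m}+1)}+x^{2^{2m}+1}+cx \] is a permutation polynomial of $\mathbb{F}_{2^{3m}}$.
   Context: A polynomial $f\in\mathbb{F}_Q[x]$ is a permutation polynomial of $\mathbb{F}_Q$ if the map $c\mapsto f(c)$ is a bijection of $\mathbb{F}_Q$. $\mathbb{F}_{2^m}$ is viewed as the subfield of $\mathbb{F}_{2^{3m}}$. *)

(* Defs.v *)
From HB Require Import structures.
From mathcomp Require Import all_boot all_order all_algebra all_field.
Set Implicit Arguments. Unset Strict Implicit. Unset Printing Implicit Defensive.
Import GRing.Theory.
Local Open Scope ring_scope.

Definition is_perm_poly (F : finFieldType) (f : {poly F}) : Prop :=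
  bijective (fun x : F => f.[x]).

(* Membership in the subfield F_{q} of a finite field: the elements fixed by
   x |-> x^q, i.e. the roots of X^q - X. *)
Definition in_subfield (F : finFieldType) (q : nat) (x : F) : bool :=
  x ^+ q == x.

(* Main.v *)
Require Import Defs.
From HB Require Import structures.
From mathcomp Require Import all_boot all_order all_algebra all_field.
From mathcomp Require Import ring.
Local Open Scope ring_scope.
Import GRing.Theory.

Lemma frobD (F : finFieldType) (h2 : 2%N \in [pchar F]) k (x y : F) :
  (x + y) ^+ (2 ^ k) = x ^+ (2 ^ k) + y ^+ (2 ^ k).
Proof.
apply: exprDn_pchar.
by rewrite pnatX (eq_pnat _ (pcharf_eq h2)) pnat_id.
Qed.

Definition Tr (F : finFieldType) (m : nat) (x : F) :=
  x + x ^+ (2 ^ m) + (x ^+ (2 ^ m)) ^+ (2 ^ m).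
Arguments Tr {F} m x.

Theorem corollary1 (F : finFieldType) (m : nat) (hm : (0 < m)%N)
  (hF : #|F| = (2 ^ (3 * m))%N)
  (c : F) (hc0 : c != 0) (hc : in_subfield (2 ^ m)%N c) :
  is_perm_poly ('X^(2 ^ m * (2 ^ (2 * m) + 1)) + 'X^(2 ^ (2 * m) + 1) + c *: 'X : {poly F}).
Proof.
have h2 : 2%N \in [pchar F] by apply: (card_finPcharP hF).
set fr := fun x : F => x ^+ (2 ^ m).
have frD x y : fr (x + y) = fr x + fr y by rewrite /fr frobD.
have frM x y : fr (x * y) = fr x * fr y by rewrite /fr exprMn.
have fr3 x : fr (fr (fr x)) = x.
  have e3 : (m + (m + m) = 3 * m)%N by rewrite !mulSn mul0n addn0.
  by rewrite /fr -!exprM -!expnD e3 -hF expf_card.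
have e2 x : x ^+ (2 ^ (2 * m)) = fr (fr x) by rewrite /fr mulSn mul1n expnD exprM.
have Tdef (x : F) : Tr m x = x + fr x + fr (fr x) by [].
have frT (x : F) : fr (Tr m x) = Tr m x.
  by rewrite !Tdef !frD fr3; ring.
have TD (x y : F) : Tr m (x + y) = Tr m x + Tr m y.
  by rewrite !Tdef !frD; ring.
have hcf : fr c = c by apply/eqP.
have TM (a x : F) : fr a = a -> Tr m (a * x) = a * Tr m x.
  by move=> ha; rewrite !Tdef !frM !ha !mulrDr.
have T2 (x : F) : Tr m (x ^+ 2) = (Tr m x) ^+ 2.
  have fr2 y : fr (y ^+ 2) = (fr y) ^+ 2 by rewrite /fr exprAC.
  have sq (y z : F) : (y + z) ^+ 2 = y ^+ 2 + z ^+ 2 by exact: (@frobD _ h2 1).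
  by rewrite !Tdef !fr2 !sq.
have Ta (a : F) : fr a = a -> Tr m a = a.
  by move=> ha; rewrite Tdef !ha -addrA addrr_pchar2 // addr0.
pose u (x : F) := x ^+ 2 + (Tr m x + c) * x.
have ev (x : F) : ('X^(2 ^ m * (2 ^ (2 * m) + 1)) + 'X^(2 ^ (2 * m) + 1) + c *: 'X : {poly F}).[x] = u x.
  rewrite !hornerE exprM !exprD !expr1 !e2 fr3 /u Tdef.
  change (x ^+ (2 ^ m)) with (fr x).
  have -> : x ^+ 2 + (x + fr x + fr (fr x) + c) * x = x * fr x + fr (fr x) * x + c * x + (x * x + x * x) by ring.
  by rewrite (addrr_pchar2 h2) addr0.
have Tu (x : F) : Tr m (u x) = c * Tr m x.
  rewrite /u TD T2 TM; last by rewrite frD frT hcf.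
  by rewrite mulrDl -expr2 addrA (addrr_pchar2 h2) add0r mulrC.
apply: injF_bij => x y /=; rewrite !ev => Huv.
have HT : Tr m x = Tr m y by apply: (mulfI hc0); rewrite -!Tu Huv.
set a := Tr m x + c.
have ha : fr a = a by rewrite frD frT hcf.
have Hp : (x + y) * (x + y + a) = 0.
  have -> : (x + y) * (x + y + a) = u x + u y + (x * y + x * y).
    by rewrite /u -HT /a; ring.
  by rewrite Huv !(addrr_pchar2 h2).
have xy2 (z w : F) : z + w = 0 -> z = w.
  by move/eqP; rewrite addr_eq0 (oppr_pchar2 h2) => /eqP.
move/eqP: Hp; rewrite mulf_eq0 => /orP [/eqP /xy2 // | /eqP H].
have Hy : y = x + a.
  by apply: esym; apply: xy2; rewrite -addrA (addrC a) addrA.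
have a0 : a = 0.
  by have := HT; rewrite Hy TD (Ta a ha) -{1}[Tr m x]addr0 => /addrI.
by rewrite Hy a0 addr0.
Qed.
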